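(* There exist a simple polygon $P$ with edge set $E$, an additive-weight function $\delta\colon E\to\mathbb{R}^+_0$, and an edge $e\in E$ such that the face $f(e)$ of the additively-weighted straight skeleton is not monotone with respect to $e$ (i.e., with respect to the supporting line of $e$).
   Context: Additively-weighted wavefront: For each edge $e$ of $P$ let $\overline{e}$ be its supporting line and $n_e$ its inward unit normal. The wavefront $\mathcal{W}_{P,\delta}(t)$ is a time-dependent set of polygons with $\mathcal{W}_{P,\delta}(0)=P$. The set $e(t)$ of wavefront fragments of input edge $e$ at time $t$ lies on the line $\overline{e}+\max(0,t-\delta(e))\cdot n_e$ (stationary until time $\delta(e)$, then moving inwards self-parallel at unit speed); incidences are preserved, and wavefront vertices are intersections of supporting lines of incident wavefront edges. Events: edge events (a segment shrinks to zero length and is removed), split events (a reflex vertex reaches another part of the wavefront, which is split there), speed-change events (at time $\delta(e)$ fragments of $e$ start to move). The process ends when all wavefront polygons have collapsed. The face of $e$ is $f(e):=\bigcup_{t\ge 0}e(t)$. A set is monotone with respect to a line $\ell$ if every line perpendicular to $\ell$ intersects it in a connected set. *)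

(* Defs.v *)
From mathcomp Require Import all_boot all_order all_algebra.
From mathcomp Require Import all_classical all_reals all_analysis.
From mathcomp Require Import Rstruct Rstruct_topology.

Set Implicit Arguments.
Unset Strict Implicit.
Unset Printing Implicit Defensive.
Import Order.TTheory GRing.Theory Num.Theory.
Import numFieldNormedType.Exports.
Local Open Scope ring_scope.
Local Open Scope classical_set_scope.

Section AWSkel.
Variable R : realType.
Notation pt := (R * R)%type.

Definition padd (p q : pt) : pt := (p.1 + q.1, p.2 + q.2).
Definition psub (p q : pt) : pt := (p.1 - q.1, p.2 - q.2).
Definition pscale (s : R) (p : pt) : pt := (s * p.1, s * p.2).
Definition dot (p q : pt) : R := p.1 * q.1 + p.2 * q.2.
Definition cross (p q : pt) : R := p.1 * q.2 - p.2 * q.1.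
Definition pnorm (p : pt) : R := Num.sqrt (dot p p).

Definition seg (a b : pt) : set pt :=
  [set x | exists s : R, 0 <= s <= 1 /\ x = padd a (pscale s (psub b a))].

Definition vtx (V : seq pt) (i : nat) : pt := nth (0, 0) V (i %% size V)%N.
Definition edge_seg (V : seq pt) (i : nat) : set pt := seg (vtx V i) (vtx V i.+1).

(* twice the signed (shoelace) area *)
Definition area2 (V : seq pt) : R :=
  \sum_(i < size V) cross (vtx V i) (vtx V i.+1).

Definition simple_polygon (V : seq pt) : Prop :=
  (3 <= size V)%N /\
  (forall i, (i < size V)%N -> vtx V i <> vtx V i.+1) /\
  (forall i j x, (i < size V)%N -> (j < size V)%N -> i <> j ->
     edge_seg V i x -> edge_seg V j x ->
     (j = (i.+1 %% size V)%N /\ x = vtx V j) \/ (i = (j.+1 %% size V)%N /\ x = vtx V i)).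

Definition edir (V : seq pt) (e : nat) : pt := psub (vtx V e.+1) (vtx V e).
Definition orient (V : seq pt) : R := if 0 < area2 V then 1 else -1.
(* inward unit normal n_e of input edge e *)
Definition innormal (V : seq pt) (e : nat) : pt :=
  pscale (orient V / pnorm (edir V e)) (- (edir V e).2, (edir V e).1).

(* the line  bar(e) + max(0, t - delta e) n_e  is  { x | n_e . x = off e t } *)
Definition off (V : seq pt) (delta : nat -> R) (e : nat) (t : R) : R :=
  dot (innormal V e) (vtx V e) + Num.max 0 (t - delta e).
Definition wline V delta e t : set pt :=
  [set x | dot (innormal V e) x = off V delta e t].

(* intersection point of the moving lines of a and b at time t (Cramer) *)
Definition isect V delta (a b : nat) (t : R) : pt :=
  let na := innormal V a in let nb := innormal V b in
  let ca := off V delta a t in let cb := off V delta b t in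
  let d := cross na nb in
  ((ca * nb.2 - cb * na.2) / d, (na.1 * cb - nb.1 * ca) / d).

(* A wavefront polygon is represented combinatorially by the cyclic sequence
   c of the labels (input edges) of its edges. Its vertex j (between the edges
   labelled c_j and c_{j+1}) is the intersection of their supporting lines. *)
Definition lab (c : seq nat) (j : nat) : nat := nth 0%N c (j %% size c)%N.
Definition wv V delta (c : seq nat) (t : R) (j : nat) : pt :=
  isect V delta (lab c j) (lab c j.+1) t.
Definition wpoly V delta (c : seq nat) (t : R) : seq pt :=
  [seq wv V delta c t j | j <- iota 0 (size c)].

(* fragments of input edge e in a configuration C (list of wavefront polygons):
   the edge of label c_{j+1} joins vertices j and j+1 *)
Definition frag V delta (C : seq (seq nat)) (e : nat) (t : R) : set pt :=
  [set x | exists c j, c \in C /\ (j < size c)%N /\ lab c j.+1 = e /\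
             seg (wv V delta c t j) (wv V delta c t j.+1) x].

Definition total_area2 V delta (C : seq (seq nat)) (t : R) : R :=
  \sum_(c <- C) area2 (wpoly V delta c t).

(* a wavefront polygon in general position at time t (no event at time t):
   consecutive supporting lines intersect in a point, the polygon is simple,
   has the orientation of P, and every wavefront edge has positive length and
   the direction of its input edge (incidences and orientations preserved) *)
Definition valid_cycle V delta (c : seq nat) (t : R) : Prop :=
  (3 <= size c)%N /\
  (forall j, (j < size c)%N ->
      cross (innormal V (lab c j)) (innormal V (lab c j.+1)) != 0) /\
  simple_polygon (wpoly V delta c t) /\
  (0 < area2 (wpoly V delta c t) <-> 0 < area2 V) /\
  (forall j, (j < size c)%N -> exists lam : R, 0 < lam /\
      psub (wv V delta c t j.+1) (wv V delta c t j) = pscale lam (edir V (lab c j.+1))).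

Definition valid_config V delta (C : seq (seq nat)) (t : R) : Prop :=
  (forall c, c \in C -> valid_cycle V delta c t) /\
  (forall i k x, (i < size C)%N -> (k < size C)%N -> i <> k ->
     (exists j, (j < size (nth [::] C i))%N /\
        seg (wv V delta (nth [::] C i) t j) (wv V delta (nth [::] C i) t j.+1) x) ->
     ~ (exists j, (j < size (nth [::] C k))%N /\
        seg (wv V delta (nth [::] C k) t j) (wv V delta (nth [::] C k) t j.+1) x)).

(* event at time t, from configuration C to configuration C':
   edge events delete labels, split events cut a cycle into arcs (so every
   new cycle is a cyclic subsequence of an old cycle); the new wavefront is
   contained in the old one (per input edge) and no area is lost, i.e. only
   zero-length edges and collapsed polygons disappear. *)
Definition event V delta (C C' : seq (seq nat)) (t : R) : Prop :=
  (forall c', c' \in C' -> exists c r, c \in C /\ subseq c' (rot r c)) /\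
  (forall e, frag V delta C' e t `<=` frag V delta C e t) /\
  total_area2 V delta C' t = total_area2 V delta C t.

(* a wavefront propagation: event times 0 = t_0 < t_1 < ... < t_K and
   configurations C_0 .. C_{K-1}, C_k being the wavefront on [t_k, t_{k+1}] *)
Definition propagation V (delta : nat -> R) (ts : seq R) (Cs : seq (seq (seq nat))) : Prop :=
  size ts = (size Cs).+1 /\ (0 < size Cs)%N /\
  nth 0 ts 0 = 0 /\
  (forall k, (k < size Cs)%N -> nth 0 ts k < nth 0 ts k.+1) /\
  nth [::] Cs 0 = [:: iota 0 (size V)] /\
  (forall k t, (k < size Cs)%N -> nth 0 ts k < t < nth 0 ts k.+1 ->
     valid_config V delta (nth [::] Cs k) t) /\
  (forall k, (k.+1 < size Cs)%N ->
     event V delta (nth [::] Cs k) (nth [::] Cs k.+1) (nth 0 ts k.+1)) /\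
  (forall c, c \in nth [::] Cs (size Cs).-1 ->
     area2 (wpoly V delta c (nth 0 ts (size Cs))) = 0).

(* face f(e) = union over t >= 0 of e(t) *)
Definition face V delta ts Cs (e : nat) : set pt :=
  [set x | exists k t, (k < size Cs)%N /\ nth 0 ts k <= t <= nth 0 ts k.+1 /\
             frag V delta (nth [::] Cs k) e t x].

Definition monotone_wrt (S : set pt) (d : pt) : Prop :=
  forall c : R, connected (S `&` [set x | dot d x = c]).

End AWSkel.

(* Main.v *)
Require Import Defs.
From mathcomp Require Import all_boot all_order all_algebra.
From mathcomp Require Import all_classical all_reals all_analysis.
From mathcomp Require Import Rstruct Rstruct_topology.
From mathcomp Require Import lra ring.
Import Order.TTheory GRing.Theory Num.Theory.
Local Open Scope ring_scope.
Notation RR := Rdefinitions.R.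
Set Implicit Arguments. Unset Strict Implicit.
Definition V0 : seq (RR * RR) := [:: (-4, -3); (0, 0); (8, 0); (-4, 16)].
Definition d0 : nat -> RR := fun i => if i == 0%N then 1 else 0.
Arguments isect : simpl never.
Arguments innormal : simpl never.
Arguments off : simpl never.

Lemma area_V0 : area2 V0 = 204.
Proof. rewrite /area2 /=. rewrite !big_ord_recr big_ord0 /= /vtx /= /cross /=. lra. Qed.

Lemma orient_V0 : orient V0 = 1.
Proof. by rewrite /orient area_V0 ifT //; lra. Qed.

Lemma pnorm_eq (p : RR * RR) (r : RR) : 0 <= r -> p.1 * p.1 + p.2 * p.2 = r ^+ 2 -> pnorm p = r.
Proof. move=> r0 h; rewrite /pnorm /dot h sqrtr_sqr ger0_norm //. Qed.

Ltac nsolve r := rewrite /innormal orient_V0 (@pnorm_eq _ r); [|lra|rewrite /edir /psub /vtx /=; lra];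
  rewrite /edir /psub /vtx /pscale /=; congr pair; field; done.

Lemma n0 : innormal V0 0 = (-3/5, 4/5). Proof. nsolve (5:RR). Qed.
Lemma n1 : innormal V0 1 = (0, 1). Proof. nsolve (8:RR). Qed.
Lemma n2 : innormal V0 2 = (-4/5, -3/5). Proof. nsolve (20:RR). Qed.
Lemma n3 : innormal V0 3 = (1, 0). Proof. nsolve (19:RR). Qed.

Lemma maxt (t : RR) : 0 <= t -> Num.max 0 (t - 0) = t.
Proof. by move=> h; rewrite subr0; apply/max_idPr. Qed.

Definition mm (t : RR) := Num.max 0 (t - 1).

Ltac isolve t := move=> ht; rewrite /isect /off ?n0 ?n1 ?n2 ?n3 /d0 /= ?maxt //;
  rewrite -/(mm t); move: (mm t) => m; rewrite /dot /cross /vtx /=; congr pair; field; done.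

Lemma I01 t : 0 <= t -> isect V0 d0 0 1 t = ((4*t - 5 * mm t)/3, t). Proof. isolve t. Qed.

Lemma I12 t : 0 <= t -> isect V0 d0 1 2 t = (8 - 2*t, t). Proof. isolve t. Qed.
Lemma I23 t : 0 <= t -> isect V0 d0 2 3 t = (t - 4, 16 - 3*t). Proof. isolve t. Qed.
Lemma I30 t : 0 <= t -> isect V0 d0 3 0 t = (t - 4, (5 * mm t + 3*t - 12)/4). Proof. isolve t. Qed.
Lemma I02 t : 0 <= t -> isect V0 d0 0 2 t = ((128 - 15 * mm t - 20*t)/25, (20 * mm t - 15*t + 96)/25). Proof. isolve t. Qed.
Lemma mm_lo t : t <= 1 -> mm t = 0.
Proof. move=> h; rewrite /mm; apply/max_idPl; lra. Qed.
Lemma mm_hi t : 1 <= t -> mm t = t - 1.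
Proof. move=> h; rewrite /mm; apply/max_idPr; lra. Qed.
Lemma dot_seg (w a b x : RR * RR) : seg a b x -> exists s, 0 <= s <= 1 /\ dot w x = dot w a + s * (dot w b - dot w a).
Proof.
case=> s [hs ->]; exists s; split => //.
case: w a b => [w1 w2] [a1 a2] [b1 b2]; rewrite /dot /padd /pscale /psub /=; ring.
Qed.

Lemma seg_sep (w a b c d x : RR * RR) (k : RR) :
  k < dot w a -> k < dot w b -> dot w c <= k -> dot w d <= k -> seg a b x -> seg c d x -> False.
Proof.
move=> ha hb hc hd /(dot_seg w) [s [/andP [s0 s1] e1]] /(dot_seg w) [u [/andP [u0 u1] e2]].
have h1 : k < dot w x.
  rewrite e1; have : 0 <= s * (dot w b - k) by apply: mulr_ge0; lra.
  have : 0 <= (1 - s) * (dot w a - k) by apply: mulr_ge0; lra.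
  move=> p q; nra.
have h2 : dot w x <= k.
  rewrite e2; have : 0 <= u * (k - dot w d) by apply: mulr_ge0; lra.
  have : 0 <= (1 - u) * (k - dot w c) by apply: mulr_ge0; lra.
  move=> p q; nra.
lra.
Qed.

Lemma seg_adj (a b c x : RR * RR) : cross (psub b a) (psub c b) != 0 -> seg a b x -> seg b c x -> x = b.
Proof.
case: a b c x => [a1 a2] [b1 b2] [c1 c2] [x1 x2].
rewrite /cross /psub /seg /padd /pscale /=.
move=> hc [s [_ [e1 e2]]] [u [_ [f1 f2]]].
have hu : u * ((b1 - a1) * (c2 - b2) - (b2 - a2) * (c1 - b1)) = 0.
  have E1 : u * (c1 - b1) = (s - 1) * (b1 - a1) by lra.
  have E2 : u * (c2 - b2) = (s - 1) * (b2 - a2) by lra.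
  have -> : u * ((b1 - a1) * (c2 - b2) - (b2 - a2) * (c1 - b1)) =
    (b1 - a1) * (u * (c2 - b2)) - (b2 - a2) * (u * (c1 - b1)) by ring.
  rewrite E1 E2; ring.
move/eqP: hu; rewrite mulf_eq0 (negbTE hc) orbF => /eqP u0.
rewrite f1 f2 u0 !mul0r !addr0 //.
Qed.

Lemma simple3 (p0 p1 p2 : RR * RR) :
  p0 <> p1 -> p1 <> p2 -> p2 <> p0 ->
  cross (psub p1 p0) (psub p2 p1) != 0 -> cross (psub p2 p1) (psub p0 p2) != 0 ->
  cross (psub p0 p2) (psub p1 p0) != 0 ->
  simple_polygon [:: p0; p1; p2].
Proof.
move=> d01 d12 d20 c1 c2 c0; split; first by [].
split; first by case=> [|[|[|]]].
move=> i j x; rewrite /edge_seg /vtx /=.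
case: i => [|[|[|i]]] //; case: j => [|[|[|j]]] // _ _ _ /=.
- by move=> h1 h2; left; split => //; exact: (seg_adj c1 h1 h2).
- by move=> h1 h2; right; split => //; exact: (seg_adj c0 h2 h1).
- by move=> h1 h2; right; split => //; exact: (seg_adj c1 h2 h1).
- by move=> h1 h2; left; split => //; exact: (seg_adj c2 h1 h2).
- by move=> h1 h2; left; split => //; exact: (seg_adj c0 h1 h2).
- by move=> h1 h2; right; split => //; exact: (seg_adj c2 h2 h1).
Qed.

Lemma simple4 (p0 p1 p2 p3 : RR * RR) :
  p0 <> p1 -> p1 <> p2 -> p2 <> p3 -> p3 <> p0 ->
  cross (psub p1 p0) (psub p2 p1) != 0 -> cross (psub p2 p1) (psub p3 p2) != 0 ->
  cross (psub p3 p2) (psub p0 p3) != 0 -> cross (psub p0 p3) (psub p1 p0) != 0 ->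
  (forall x, seg p0 p1 x -> seg p2 p3 x -> False) ->
  (forall x, seg p1 p2 x -> seg p3 p0 x -> False) ->
  simple_polygon [:: p0; p1; p2; p3].
Proof.
move=> d01 d12 d23 d30 c1 c2 c3 c0 s02 s13; split; first by [].
split; first by case=> [|[|[|[|]]]].
move=> i j x; rewrite /edge_seg /vtx /=.
case: i => [|[|[|[|i]]]] //; case: j => [|[|[|[|j]]]] // _ _ _ /=.
- by move=> h1 h2; left; split => //; exact: (seg_adj c1 h1 h2).
- by move=> h1 h2; case: (s02 _ h1 h2).
- by move=> h1 h2; right; split => //; exact: (seg_adj c0 h2 h1).
- by move=> h1 h2; right; split => //; exact: (seg_adj c1 h2 h1).
- by move=> h1 h2; left; split => //; exact: (seg_adj c2 h1 h2).
- by move=> h1 h2; case: (s13 _ h1 h2).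
- by move=> h1 h2; case: (s02 _ h2 h1).
- by move=> h1 h2; right; split => //; exact: (seg_adj c2 h2 h1).
- by move=> h1 h2; left; split => //; exact: (seg_adj c3 h1 h2).
- by move=> h1 h2; left; split => //; exact: (seg_adj c0 h1 h2).
- by move=> h1 h2; case: (s13 _ h2 h1).
- by move=> h1 h2; right; split => //; exact: (seg_adj c3 h2 h1).
Qed.
Lemma nz (x : RR) : (x < 0) || (0 < x) -> x != 0.
Proof. by move=> /orP[h|h]; [exact: ltr0_neq0 | exact: lt0r_neq0]. Qed.
Ltac nzt := apply: nz; apply/orP; first [left; lra | right; lra].

Lemma crossZ (l l' : RR) (u v : RR * RR) : cross (pscale l u) (pscale l' v) = l * l' * cross u v.
Proof. case: u v => [u1 u2] [v1 v2]; rewrite /cross /pscale /=; ring. Qed.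

Lemma dist_dir (p q d : RR * RR) (l : RR) : psub q p = pscale l d -> 0 < l -> (d.1 != 0) || (d.2 != 0) -> p <> q.
Proof.
move=> E l0 hd pq; subst q; move: E hd; case: p d => [p1 p2] [d1 d2]; rewrite /psub /pscale /=.
case=> e1 e2; rewrite !subrr in e1 e2.
have h1 : d1 = 0 by apply: (mulfI (lt0r_neq0 l0)); rewrite -e1 mulr0.
have h2 : d2 = 0 by apply: (mulfI (lt0r_neq0 l0)); rewrite -e2 mulr0.
by rewrite h1 h2 eqxx.
Qed.

Lemma cross_dirs (p q r d d' : RR * RR) (l l' : RR) : psub q p = pscale l d -> psub r q = pscale l' d' ->
  0 < l -> 0 < l' -> cross d d' != 0 -> cross (psub q p) (psub r q) != 0.
Proof.
move=> E1 E2 h1 h2 hc; rewrite E1 E2 crossZ.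
by rewrite !mulf_neq0 // lt0r_neq0.
Qed.

Definition c4 : seq nat := [:: 0; 1; 2; 3]%N.
Definition c3 : seq nat := [:: 0; 2; 3]%N.

Definition Q0 t := ((4*t - 5 * mm t)/3, t).
Definition Q1 (t : RR) := (8 - 2*t, t).
Definition Q2 (t : RR) := (t - 4, 16 - 3*t).
Definition Q3 t := (t - 4, (5 * mm t + 3*t - 12)/4).
Definition T0 t := ((128 - 15 * mm t - 20*t)/25, (20 * mm t - 15*t + 96)/25).

Lemma wpoly4 t : 0 <= t -> wpoly V0 d0 c4 t = [:: Q0 t; Q1 t; Q2 t; Q3 t].
Proof. by move=> ht; rewrite /wpoly /= /wv /lab /= I01 // I12 // I23 // I30. Qed.
Lemma wpoly3 t : 0 <= t -> wpoly V0 d0 c3 t = [:: T0 t; Q2 t; Q3 t].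
Proof. by move=> ht; rewrite /wpoly /= /wv /lab /= I02 // I23 // I30. Qed.

Lemma mm_cases t : (t <= 1 /\ mm t = 0) \/ (1 <= t /\ mm t = t - 1).
Proof. by case: (lerP t 1) => h; [left; split=> //; apply: mm_lo | right; split; [lra|apply: mm_hi; lra]]. Qed.

Ltac dirsolve := rewrite /edir /psub /pscale /vtx /Q0 /Q1 /Q2 /Q3 /T0 /=; congr pair; lra.

Lemma quad_dirs t : 0 < t < 19/5 ->
  [/\ psub (Q1 t) (Q0 t) = pscale ((8 - 2*t - (4*t - 5 * mm t)/3)/8) (edir V0 1),
      psub (Q2 t) (Q1 t) = pscale ((4 - t)/4) (edir V0 2),
      psub (Q3 t) (Q2 t) = pscale ((76 - 15*t - 5 * mm t)/76) (edir V0 3),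
      psub (Q0 t) (Q3 t) = pscale (((4*t - 5 * mm t)/3 - t + 4)/4) (edir V0 0) &
   [/\ 0 < (8 - 2*t - (4*t - 5 * mm t)/3)/8, 0 < (4 - t)/4, 0 < (76 - 15*t - 5 * mm t)/76 &
       0 < ((4*t - 5 * mm t)/3 - t + 4)/4]].
Proof.
move=> /andP[t0 t1].
have [[h m]|[h m]] := mm_cases t; rewrite m; (split; [dirsolve|dirsolve|dirsolve|dirsolve|split; lra]).
Qed.
Lemma cross_edir01 : cross (edir V0 1) (edir V0 2) = 128. Proof. rewrite /cross /edir /psub /vtx /=; lra. Qed.

Ltac ednz := rewrite /edir /psub /vtx /=; apply/orP; first [left; nzt | right; nzt].
Ltac crosse := rewrite /cross /edir /psub /vtx /=; nzt.

Lemma quad_valid t : 0 < t < 19/5 -> valid_cycle V0 d0 c4 t.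
Proof.
move=> ht0; have ht : 0 <= t by case/andP: ht0 => ? ?; lra.
have [D1 D2 D3 D0 [L1 L2 L3 L0]] := quad_dirs ht0.
move: ht0 => /andP[t0 t1].
split; first by [].
split.
  case=> [|[|[|[|j]]]] // _; rewrite /lab /= ?n0 ?n1 ?n2 ?n3 /cross /=; nzt.
split.
  rewrite wpoly4 //; apply: simple4.
  - apply: (dist_dir D1 L1); ednz.
  - apply: (dist_dir D2 L2); ednz.
  - apply: (dist_dir D3 L3); ednz.
  - apply: (dist_dir D0 L0); ednz.
  - apply: cross_dirs D1 D2 L1 L2 _; crosse.
  - apply: cross_dirs D2 D3 L2 L3 _; crosse.
  - apply: cross_dirs D3 D0 L3 L0 _; crosse.
  - apply: cross_dirs D0 D1 L0 L1 _; crosse.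
  - move=> x h1 h2; apply: (@seg_sep (1, 0) _ _ _ _ _ (t - 4) _ _ _ _ h1 h2);
    rewrite /dot /Q0 /Q1 /Q2 /Q3 /=; have [[h m]|[h m]] := mm_cases t; rewrite ?m; lra.
  - move=> x h1 h2; apply: (@seg_sep (-4, -3) _ _ _ _ _ (5 * t - 32) _ _ _ _ h2 h1);
    rewrite /dot /Q0 /Q1 /Q2 /Q3 /=; have [[h m]|[h m]] := mm_cases t; rewrite ?m; lra.
split.
  rewrite area_V0 wpoly4 //; split=> _; first lra.
  rewrite /area2 /= !big_ord_recr big_ord0 /= /vtx /= /cross /Q0 /Q1 /Q2 /Q3 /=.
  have [[h m]|[h m]] := mm_cases t; rewrite m.
    have : 0 <= t * t by nra.
    nra.
  have : 0 <= (t - 161/40) * (t - 161/40) by nra.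
  nra.
case=> [|[|[|[|j]]]] // _; rewrite /wv /lab /= ?I01 ?I12 ?I23 ?I30 //.
- by exists ((8 - 2*t - (4*t - 5 * mm t)/3)/8).
- by exists ((4 - t)/4).
- by exists ((76 - 15*t - 5 * mm t)/76).
- by exists (((4*t - 5 * mm t)/3 - t + 4)/4).
Qed.
Lemma tri_dirs t : 19/5 < t < 81/20 ->
  [/\ psub (Q2 t) (T0 t) = pscale ((243 - 60*t)/300) (edir V0 2),
      psub (Q3 t) (Q2 t) = pscale ((81 - 20*t)/76) (edir V0 3),
      psub (T0 t) (Q3 t) = pscale ((243 - 60*t)/100) (edir V0 0) &
   [/\ 0 < (243 - 60*t)/300, 0 < (81 - 20*t)/76 & 0 < (243 - 60*t)/100]].
Proof.
move=> /andP[t0 t1].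
have m : mm t = t - 1 by apply: mm_hi; lra.
rewrite /Q3 /T0 m; split; [dirsolve|dirsolve|dirsolve|split; lra].
Qed.

Lemma tri_valid t : 19/5 < t < 81/20 -> valid_cycle V0 d0 c3 t.
Proof.
move=> ht0; have ht : 0 <= t by case/andP: ht0 => ? ?; lra.
have [D1 D2 D0 [L1 L2 L0]] := tri_dirs ht0.
move: ht0 => /andP[t0 t1].
have m : mm t = t - 1 by apply: mm_hi; lra.
split; first by [].
split.
  case=> [|[|[|j]]] // _; rewrite /lab /= ?n0 ?n1 ?n2 ?n3 /cross /=; nzt.
split.
  rewrite wpoly3 //; apply: simple3.
  - apply: (dist_dir D1 L1); ednz.
  - apply: (dist_dir D2 L2); ednz.
  - apply: (dist_dir D0 L0); ednz.
  - apply: cross_dirs D1 D2 L1 L2 _; crosse.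
  - apply: cross_dirs D2 D0 L2 L0 _; crosse.
  - apply: cross_dirs D0 D1 L0 L1 _; crosse.
split.
  rewrite area_V0 wpoly3 //; split=> _; first lra.
  rewrite /area2 /= !big_ord_recr big_ord0 /= /vtx /= /cross /T0 /Q2 /Q3 /= m.
  have : 0 < (81/20 - t) * (81/20 - t) by apply: mulr_gt0; lra.
  nra.
case=> [|[|[|j]]] // _; rewrite /wv /lab /= ?I02 ?I23 ?I30 //.
- by exists ((243 - 60*t)/300).
- by exists ((81 - 20*t)/76).
- by exists ((243 - 60*t)/100).
Qed.

Lemma simple_V0 : simple_polygon V0.
Proof.
rewrite /V0; apply: simple4.
- move=> e; move: (congr1 fst e) (congr1 snd e) => /= e1 e2; clear e; lra.
- move=> e; move: (congr1 fst e) (congr1 snd e) => /= e1 e2; clear e; lra.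
- move=> e; move: (congr1 fst e) (congr1 snd e) => /= e1 e2; clear e; lra.
- move=> e; move: (congr1 fst e) (congr1 snd e) => /= e1 e2; clear e; lra.
- rewrite /cross /psub /=; nzt.
- rewrite /cross /psub /=; nzt.
- rewrite /cross /psub /=; nzt.
- rewrite /cross /psub /=; nzt.
- move=> x h1 h2; apply: (@seg_sep (-4, -3) _ _ _ _ _ (-32) _ _ _ _ h1 h2); rewrite /dot /=; lra.
- move=> x h1 h2; apply: (@seg_sep (1, 0) _ _ _ _ _ (-2) _ _ _ _ h1 h2); rewrite /dot /=; lra.
Qed.
Lemma single_valid (c : seq nat) t : valid_cycle V0 d0 c t -> valid_config V0 d0 [:: c] t.
Proof.
move=> h; split; first by move=> c'; rewrite inE => /eqP ->.
by case=> [|i] [|k] //.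
Qed.

Lemma E19a : isect V0 d0 0 2 (19/5) = isect V0 d0 1 2 (19/5).
Proof. rewrite I02; last lra. rewrite I12; last lra. rewrite mm_hi; last lra. congr pair; lra. Qed.
Lemma E19b : isect V0 d0 0 1 (19/5) = isect V0 d0 0 2 (19/5).
Proof. rewrite I02; last lra. rewrite I01; last lra. rewrite mm_hi; last lra. congr pair; lra. Qed.

Lemma ev_frag e : (frag V0 d0 [:: c3] e (19/5) `<=` frag V0 d0 [:: c4] e (19/5))%classic.
Proof.
move=> x [c [j [hc [hj [hl hs]]]]].
move: hc hj hl hs; rewrite inE => /eqP -> {c}.
case: j => [|[|[|j]]] // _; rewrite /wv /lab /= => hl hs; exists c4.
- exists 1%N; rewrite /wv /lab /= -E19a; split; first by rewrite inE.
  by split; [|split].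
- exists 2%N; rewrite /wv /lab /=; split; first by rewrite inE.
  by split; [|split].
- exists 3%N; rewrite /wv /lab /= E19b; split; first by rewrite inE.
  by split; [|split].
Qed.

Lemma ev_area : total_area2 V0 d0 [:: c3] (19/5) = total_area2 V0 d0 [:: c4] (19/5).
Proof.
rewrite /total_area2 !big_seq1 wpoly3; last lra. rewrite wpoly4; last lra.
rewrite /area2 /= !big_ord_recr !big_ord0 /= /vtx /= /cross /T0 /Q0 /Q1 /Q2 /Q3 /= mm_hi; last lra.
lra.
Qed.

Lemma fin_area : area2 (wpoly V0 d0 c3 (81/20)) = 0.
Proof.
rewrite wpoly3; last lra.
rewrite /area2 /= !big_ord_recr !big_ord0 /= /vtx /= /cross /T0 /Q2 /Q3 /= mm_hi; last lra.
lra.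
Qed.

Definition ts0 : seq RR := [:: 0; 19/5; 81/20].
Definition Cs0 : seq (seq (seq nat)) := [:: [:: c4]; [:: c3]].

Lemma prop0 : propagation V0 d0 ts0 Cs0.
Proof.
split; first by []. split; first by []. split; first by [].
split; first by case=> [|[|k]] //= _; lra.
split; first by [].
split.
  case=> [|[|k]] // t _ /= ht; apply: single_valid.
  - exact: quad_valid.
  - exact: tri_valid.
split.
  case=> [|k] // _; split.
  - move=> c'; rewrite inE => /eqP ->; exists c4, 0%N; split; first by rewrite inE.
    by [].
  by split; [exact: ev_frag | exact: ev_area].
by move=> c; rewrite inE => /eqP ->; exact: fin_area.
Qed.
Definition rots4 : seq (seq nat) := [:: [:: 0; 1; 2; 3]; [:: 1; 2; 3; 0]; [:: 2; 3; 0; 1]; [:: 3; 0; 1; 2]]%N.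

Lemma c4_rots : c4 \in rots4. Proof. by []. Qed.

Lemma rot_rots c r : c \in rots4 -> rot r c \in rots4.
Proof.
move=> hc; have s4 : size c = 4%N by move: hc; rewrite !inE => /or4P [] /eqP ->.
case: (leqP 4 r) => hr; first by rewrite rot_oversize // s4.
move: hc; rewrite !inE => /or4P [] /eqP ->;
  by case: r hr => [|[|[|[|r]]]].
Qed.

Lemma rots_pair c1 c2 : c1 \in rots4 -> c2 \in rots4 ->
  exists j, (j < 4)%N /\ lab c2 j = lab c1 0 /\ lab c2 j.+1 = lab c1 1.
Proof.
rewrite !inE => /or4P [] /eqP -> /or4P [] /eqP ->;
  first [by exists 0%N | by exists 1%N | by exists 2%N | by exists 3%N].
Qed.

Lemma frag_rot c l t x : c \in rots4 -> frag V0 d0 [:: c] l t x ->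
  exists i, (i < 4)%N /\ l = (i.+1 %% 4)%N /\ edge_seg (wpoly V0 d0 c4 t) i x.
Proof.
move=> hc [c' [j [hc' [hj [hl hs]]]]]; move: hc'; rewrite inE => /eqP ?; subst c'.
move: hc hj hl hs; rewrite !inE => /or4P [] /eqP -> /=;
  case: j => [|[|[|[|j]]]] // _ hl hs;
  first [exists 0%N; by split; [|split] | exists 1%N; by split; [|split]
        | exists 2%N; by split; [|split] | exists 3%N; by split; [|split]].
Qed.

Lemma frag_rot_conv c i t x : c \in rots4 -> (i < 4)%N -> edge_seg (wpoly V0 d0 c4 t) i x ->
  frag V0 d0 [:: c] (i.+1 %% 4)%N t x.
Proof.
move=> hc hi hs; exists c; move: hc hi hs; rewrite !inE => /or4P [] /eqP -> /=;
  case: i => [|[|[|[|i]]]] // _ hs;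
  first [exists 0%N; by split; [|split] | exists 1%N; by split; [|split]
        | exists 2%N; by split; [|split] | exists 3%N; by split; [|split]].
Qed.

Lemma area_rot c t : c \in rots4 -> area2 (wpoly V0 d0 c t) = area2 (wpoly V0 d0 c4 t).
Proof.
rewrite !inE => /or4P [] /eqP -> //;
  rewrite /area2 /= !big_ord_recr !big_ord0 /= /vtx /wv /lab /=; lra.
Qed.
Lemma seg_l (p q : RR * RR) : seg p q p.
Proof. exists 0; split; first by rewrite lexx ler01. case: p q => [p1 p2] [q1 q2]; rewrite /padd /pscale /=; congr pair; ring. Qed.
Lemma seg_r (p q : RR * RR) : seg p q q.
Proof. exists 1; split; first by rewrite ler01 lexx. case: p q => [p1 p2] [q1 q2]; rewrite /padd /pscale /psub /=; congr pair; ring. Qed.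

Definition nonadj (a b : nat) : bool :=
  [&& (a < 4)%N, (b < 4)%N, a != b, b != (a.+1 %% 4)%N & a != (b.+1 %% 4)%N].

Lemma quad_facts t : 0 < t < 19/5 ->
  simple_polygon (wpoly V0 d0 c4 t) /\ 0 < area2 (wpoly V0 d0 c4 t).
Proof.
move=> ht; have [_ [_ [hs [ha _]]]] := quad_valid ht.
by split => //; apply/ha; rewrite area_V0; lra.
Qed.

Lemma nonadj_contra c t P a b : c \in rots4 -> 0 < t < 19/5 ->
  frag V0 d0 [:: c] a t P -> frag V0 d0 [:: c] b t P -> nonadj a b -> False.
Proof.
move=> hc ht ha hb hn.
have [hs _] := quad_facts ht.
have [i1 [hi1 [e1 s1]]] := frag_rot hc ha.
have [i2 [hi2 [e2 s2]]] := frag_rot hc hb.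
case: hs => _ [_ hs].
have hw : size (wpoly V0 d0 c4 t) = 4%N by rewrite size_map size_iota.
subst a b.
case: (eqVneq i1 i2) => [?|hne]; first by subst i2; move: hn; rewrite /nonadj eqxx !andbF.
have := hs i1 i2 P; rewrite hw => /(_ hi1 hi2 (elimN eqP hne) s1 s2).
clear ha hb s1 s2; move: hn hne; case: i1 hi1 => [|[|[|[|i1]]]] // _; case: i2 hi2 => [|[|[|[|i2]]]] //;
  by move=> _ /= _ _ [[]|[]].
Qed.

Lemma tri_contra c C' t c' j : c \in rots4 -> 0 < t < 19/5 ->
  (forall e, (frag V0 d0 C' e t `<=` frag V0 d0 [:: c] e t)%classic) ->
  c' \in C' -> size c' = 3%N -> (j < 3)%N -> nonadj (lab c' j) (lab c' j.+1) -> False.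
Proof.
move=> hc ht hf hc' s3 hj hn.
apply: (nonadj_contra (P := wv V0 d0 c' t j) hc ht _ _ hn); apply: hf.
- exists c', ((j + 2) %% 3)%N; split => //; split; first by rewrite s3 ltn_mod.
  move: hj; rewrite /wv /lab s3; case: j {hn} => [|[|[|j]]] //= _; split=> //; exact: seg_r.
- exists c', j; split => //; split; first by rewrite s3.
  split => //; exact: seg_l.
Qed.
Lemma sub_rots c' s : s \in rots4 -> subseq c' s -> (3 <= size c')%N ->
  c' \in rots4 \/ (size c' = 3%N /\ exists j, (j < 3)%N /\ nonadj (lab c' j) (lab c' j.+1)).
Proof.
move=> hs /subseqP [m hm ->] {c'}.
have s4 : size s = 4%N by move: hs; rewrite !inE => /or4P [] /eqP ->.
move: hm; rewrite s4.
case: m => [|b0 [|b1 [|b2 [|b3 [|]]]]] // _.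
move: hs; rewrite !inE => /or4P [] /eqP ->; case: b0; case: b1; case: b2; case: b3 => //= _;
  first [by left | right; split; first by [];
    first [by exists 0%N | by exists 1%N | by exists 2%N]].
Qed.

Lemma step c C' t t' : c \in rots4 -> 0 < t < 19/5 -> event V0 d0 [:: c] C' t ->
  valid_config V0 d0 C' t' -> exists c'', c'' \in rots4 /\ C' = [:: c''].
Proof.
move=> hc ht [Hsub [Hfrag Harea]] [Hval Hdisj].
have Hc' : forall c', c' \in C' -> c' \in rots4.
  move=> c' hc'; have [hs3 _] := Hval c' hc'.
  have [c0 [r [hc0 hsub]]] := Hsub c' hc'.
  move: hc0; rewrite inE => /eqP ?; subst c0.
  case: (sub_rots (rot_rots r hc) hsub hs3) => // [[s3 [j [hj hn]]]].
  by case: (tri_contra hc ht Hfrag hc' s3 hj hn).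
case: C' Hsub Hfrag Harea Hval Hdisj Hc' => [|c1 [|c2 C']] Hsub Hfrag Harea Hval Hdisj Hc'.
- have [_ hpos] := quad_facts ht.
  move: Harea; rewrite /total_area2 big_nil big_seq1 area_rot //; lra.
- by exists c1; split => //; apply: Hc'; rewrite inE.
- have h1 : c1 \in rots4 by apply: Hc'; rewrite inE eqxx.
  have h2 : c2 \in rots4 by apply: Hc'; rewrite !inE eqxx orbT.
  have sz : forall c0, c0 \in rots4 -> size c0 = 4%N by move=> c0; rewrite !inE => /or4P [] /eqP ->.
  have [j [hj [e1 e2]]] := rots_pair h1 h2.
  exfalso; apply: (Hdisj 0%N 1%N (wv V0 d0 c1 t' 0)) => //.
  + by exists 0%N; rewrite /= sz //; split => //; exact: seg_l.
  + exists j; rewrite /= sz //; split => //.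
    have -> : wv V0 d0 c1 t' 0 = wv V0 d0 c2 t' j by rewrite /wv e1 e2.
    exact: seg_l.
Qed.
Lemma isect_on a b t : cross (innormal V0 a) (innormal V0 b) != 0 ->
  dot (innormal V0 a) (isect V0 d0 a b t) = off V0 d0 a t /\
  dot (innormal V0 b) (isect V0 d0 a b t) = off V0 d0 b t.
Proof.
rewrite /isect; move: (innormal V0 a) (innormal V0 b) (off V0 d0 a t) (off V0 d0 b t) => [a1 a2] [b1 b2] ca cb.
rewrite /cross /dot /= => hc; split; by field.
Qed.

Lemma frag_line C t' l t x : valid_config V0 d0 C t' -> frag V0 d0 C l t x ->
  dot (innormal V0 l) x = off V0 d0 l t.
Proof.
move=> [hv _] [c [j [hc [hj [hl hs]]]]].
have [h3 [hcr _]] := hv c hc.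
have n0 : (0 < size c)%N by apply: leq_trans h3.
have c1 := hcr j hj.
have hj2 : (j.+1 %% size c < size c)%N by rewrite ltn_mod.
have c2 := hcr _ hj2.
have e1 : lab c (j.+1 %% size c) = lab c j.+1 by rewrite /lab modn_mod.
have e2 : lab c (j.+1 %% size c).+1 = lab c j.+2 by rewrite /lab -addn1 modnDml addn1.
rewrite e1 e2 in c2.
have [_ A] := isect_on t c1.
have [B _] := isect_on t c2.
move: hs; rewrite /wv -hl => /(dot_seg (innormal V0 (lab c j.+1))) [s [_ ->]].
rewrite A B; ring.
Qed.
Lemma ts_nonneg ts Cs : propagation V0 d0 ts Cs -> forall k, (k <= size Cs)%N -> 0 <= nth 0 ts k.
Proof.
move=> [_ [_ [h0 [hinc _]]]]; elim=> [|k IH] hk; first by rewrite h0.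
have := hinc k hk; have := IH (ltnW hk); lra.
Qed.

Lemma good ts Cs : propagation V0 d0 ts Cs -> forall k, (k < size Cs)%N -> nth 0 ts k <= 3 ->
  exists c, c \in rots4 /\ nth [::] Cs k = [:: c].
Proof.
move=> hp; have hnn := ts_nonneg hp.
case: hp => _ [_ [h0 [hinc [hC0 [hval [hev _]]]]]].
elim=> [|k IH] hk ht.
  by exists c4; rewrite hC0.
have hk' : (k < size Cs)%N by apply: ltnW.
have hi := hinc k hk'.
have [c [hc eC]] := IH hk' (ltW (lt_le_trans hi ht)).
have he := hev k hk; rewrite eC in he.
have hi2 := hinc k.+1 hk.
have hv := hval k.+1 ((nth 0 ts k.+1 + nth 0 ts k.+2) / 2) hk.
have hv' : valid_config V0 d0 (nth [::] Cs k.+1) ((nth 0 ts k.+1 + nth 0 ts k.+2) / 2).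
  by apply: hv; apply/andP; split; lra.
have h0k := hnn k (ltnW hk').
apply: (step hc _ he hv'); apply/andP; split; lra.
Qed.

Lemma dIVT (f : nat -> RR) (c : RR) K : f 0%N <= c -> c < f K -> exists k, (k < K)%N /\ f k <= c < f k.+1.
Proof.
elim: K => [|K IH] h0 hK; first lra.
case: (lerP (f K) c) => hc.
  by exists K; split => //; apply/andP.
have [k [hk hk2]] := IH h0 hc.
by exists k; split => //; apply: ltnW.
Qed.

Lemma n1' : innormal V0 1 = (0, 1). Proof. exact: n1. Qed.

Lemma edir1 : edir V0 1 = (8, 0).
Proof. rewrite /edir /psub /vtx /=; congr pair; lra. Qed.

Lemma last_gt ts Cs : propagation V0 d0 ts Cs -> 3 < nth 0 ts (size Cs).
Proof.
move=> hp; have hnn := ts_nonneg hp.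
have hg := good hp.
case: hp => _ [hpos [h0 [hinc [hC0 [hval [hev hfin]]]]]].
rewrite ltNge; apply/negP => hle.
have hK : (size Cs).-1.+1 = size Cs by rewrite prednK.
have hi := hinc (size Cs).-1; rewrite hK in hi; have := hi (leqnn _) => {}hi.
have hlt : ((size Cs).-1 < size Cs)%N by rewrite prednK.
have [c [hc eC]] := hg (size Cs).-1 hlt (ltW (lt_le_trans hi hle)).
have := hfin c; rewrite eC inE eqxx => /(_ isT).
rewrite area_rot //.
have hn := hnn (size Cs).-1 (leq_pred _).
have htt : 0 < nth 0 ts (size Cs) < 19/5 by apply/andP; split; lra.
have [_ hpos'] := quad_facts htt.
lra.
Qed.
Lemma face_p1 ts Cs : propagation V0 d0 ts Cs -> face V0 d0 ts Cs 1 (1, 0).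
Proof.
move=> hp; have hnn := ts_nonneg hp.
case: hp => _ [hpos [h0 [hinc [hC0 _]]]].
exists 0%N, 0; split => //; split.
  have := hinc 0%N hpos; rewrite h0 => h; apply/andP; split; lra.
rewrite hC0.
have -> : iota 0 (size V0) = c4 by [].
apply: (@frag_rot_conv c4 0%N) => //.
rewrite /edge_seg /vtx wpoly4 //= /Q0 /Q1 mm_lo; last lra.
exists (1/8); split; first by apply/andP; split; lra.
rewrite /padd /pscale /psub /=; congr pair; lra.
Qed.

Lemma face_p3 ts Cs : propagation V0 d0 ts Cs -> face V0 d0 ts Cs 1 (1, 3).
Proof.
move=> hp; have hnn := ts_nonneg hp; have hl := last_gt hp; have hg := good hp.
case: hp => _ [hpos [h0 [hinc [hC0 _]]]].
have [k [hk /andP [hk1 hk2]]] := dIVT (f := fun k => nth 0 ts k) (c := 3) (ltac:(rewrite /= h0; lra)) hl.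
have [c [hc eC]] := hg k hk hk1.
exists k, 3; split => //; split; first by apply/andP; split; lra.
rewrite eC; apply: (@frag_rot_conv c 0%N) => //.
rewrite /edge_seg /vtx wpoly4 //= /Q0 /Q1 mm_hi; last lra.
exists (1/4); split; first by apply/andP; split; lra.
rewrite /padd /pscale /psub /=; congr pair; lra.
Qed.

Lemma face_p2 ts Cs : propagation V0 d0 ts Cs -> ~ face V0 d0 ts Cs 1 (1, 1).
Proof.
move=> hp; have hnn := ts_nonneg hp; have hg := good hp.
move=> [k [t [hk [/andP [hk1 hk2] hfr]]]].
case: hp => _ [hpos [h0 [hinc [hC0 [hval _]]]]].
have hi := hinc k hk.
have hv : valid_config V0 d0 (nth [::] Cs k) ((nth 0 ts k + nth 0 ts k.+1) / 2).
  by apply: hval => //; apply/andP; split; lra.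
have := frag_line hv hfr.
have h0k := hnn k (ltnW hk).
rewrite /off n1 /d0 /= maxt; last lra.
rewrite /dot /vtx /= => et.
have ht1 : t = 1 by lra.
subst t.
have [c [hc eC]] := hg k hk (ltac:(lra)).
rewrite eC in hfr.
have [i [hi4 [hie hs]]] := frag_rot hc hfr.
move: hi4 hie hs; case: i => [|[|[|[|i]]]] // _ _.
rewrite /edge_seg /vtx wpoly4 //= /Q0 /Q1 mm_lo; last lra.
move=> /(dot_seg (1, 0)); rewrite /dot /= => -[s [/andP [s0 s1] e]].
nra.
Qed.
Lemma snd_cont (S : set (RR * RR)) : {within S, continuous (@snd RR RR)}%classic.
Proof. apply: continuous_subspaceT => x; exact: cvg_snd. Qed.

Theorem lemma7 :
  exists (V : seq (Rdefinitions.R * Rdefinitions.R)) (delta : nat -> Rdefinitions.R) (e : nat),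
    simple_polygon V /\
    (forall i, (i < size V)%N -> 0 <= delta i) /\
    (e < size V)%N /\
    (exists ts Cs, propagation V delta ts Cs) /\
    (forall ts Cs, propagation V delta ts Cs ->
       ~ monotone_wrt (face V delta ts Cs e) (edir V e)).
Proof.
exists V0, d0, 1%N; split; first exact: simple_V0.
split; first by move=> i _; rewrite /d0; case: (i == 0)%N; lra.
split; first by [].
split; first by exists ts0, Cs0; exact: prop0.
move=> ts Cs hp hm.
have f1 := face_p1 hp; have f2 := face_p2 hp; have f3 := face_p3 hp.
have hc := hm 8; rewrite edir1 in hc.
set S := (face V0 d0 ts Cs 1 `&` [set x | dot (8, 0) x = 8])%classic in hc.
have hi := connected_continuous_connected hc (@snd_cont S).
move/connected_intervalP: hi => hi.
have hS1 : S (1, 0) by split => //; rewrite /dot /=; lra.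
have hS3 : S (1, 3) by split => //; rewrite /dot /=; lra.
have := hi 0 3 (ex_intro2 _ _ (1, 0) hS1 erefl) (ex_intro2 _ _ (1, 3) hS3 erefl) 1.
case; first by apply/andP; split; lra.
move=> [x1 x2] [hf hd] /= e2; subst x2.
move: hd; rewrite /dot /= => hd.
have e1 : x1 = 1 by lra.
rewrite e1 in hf.
exact: f2 hf.
Qed.
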